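(* Let $E^3=\{000,011,101,110\}$ and fix $u=u_1u_2u_3\in E^3$. Let $n\ge 1$. Alice, Bob and Carol receive $X=(x_1,\dots,x_n)$, $Y=(y_1,\dots,y_n)$, $Z=(z_1,\dots,z_n)\in\{0,1\}^n$ respectively, under the promise that $x_iy_iz_i\in E^3$ (i.e. $x_i\oplus y_i\oplus z_i=0$) for every $1\le i\le n$. Define $f_u(X,Y,Z)=\bigoplus_{i=1}^n t_u(x_iy_iz_i)$, where $t_u(w)=1$ if $w=u$ and $t_u(w)=0$ otherwise. Suppose the three parties share $n$ copies of the three-qubit state $|\psi_3\rangle=\frac12(|000\rangle-|011\rangle-|101\rangle-|110\rangle)$, the first, second and third qubit of the $i$-th copy being held by Alice, Bob and Carol respectively. Then there is a protocol computing $f_u$ in which the only quantum operations are the following: for each $i$, each party applies to its qubit of the $i$-th copy the Hadamard gate $H$ if its $i$-th input bit differs from the corresponding bit of $u$ and the identity $I$ otherwise (so that the three-qubit operation on the $i$-th copy is $III$, $IHH$, $HIH$, $HHI$ according as $u\oplus x_iy_iz_i$ equals $000,011,101,110$), followed by a measurement of each qubit in the computational basis; after local classical computation, Bob and Carol each send one classical bit to Alice (two classical bits in total), and Alice then outputs $f_u(X,Y,Z)$ correctly for every input satisfying the promise.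
   Context: $H$ denotes the one-qubit Hadamard gate $H|0\rangle=(|0\rangle+|1\rangle)/\sqrt2$, $H|1\rangle=(|0\rangle-|1\rangle)/\sqrt2$, and $I$ the identity. A three-letter word such as $IHH$ denotes the tensor product of the listed one-qubit operations applied to the first, second and third qubit respectively. In the communication model, parties may perform arbitrary local operations on their own qubits and classical data, but communicate only by sending classical bits to Alice; no quantum communication is allowed. *)

(* Defs.v *)
From mathcomp Require Import all_boot all_order all_algebra all_field.
Set Implicit Arguments. Unset Strict Implicit. Unset Printing Implicit Defensive.
Import Order.TTheory GRing.Theory Num.Theory.
Local Open Scope ring_scope.

(** Computational basis of one qubit is indexed by bool (false = |0>, true = |1>). *)

(** One-qubit gate applied by a party: [false] = identity I, [true] = Hadamard H.
    [gate g a x] is the matrix entry <a| G |x>. *)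
Definition hadamard (a x : bool) : algC :=
  (if a && x then -1 else 1) / sqrtC 2%:R.
Definition identity_gate (a x : bool) : algC := if a == x then 1 else 0.
Definition gate (g : bool) : bool -> bool -> algC :=
  if g then hadamard else identity_gate.

Definition psi3 (x y z : bool) : algC :=
  if [&& ~~ x, ~~ y & ~~ z] then 2%:R^-1
  else if x (+) y (+) z then 0 else - 2%:R^-1.

(** Amplitude of measurement outcome |a b c> after applying the local gates
    g1 (x) g2 (x) g3 to |psi_3>:  <abc| G1 (x) G2 (x) G3 |psi_3>. *)
Definition amp3 (g1 g2 g3 a b c : bool) : algC :=
  \sum_(x : bool) \sum_(y : bool) \sum_(z : bool)
     gate g1 a x * gate g2 b y * gate g3 c z * psi3 x y z.

Definition inE3 (w1 w2 w3 : bool) : bool := ~~ (w1 (+) w2 (+) w3).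

Definition f_u (u1 u2 u3 : bool) n (X Y Z : 'I_n -> bool) : bool :=
  \big[addb/false]_(i < n) [&& X i == u1, Y i == u2 & Z i == u3].

(** Since the shared state is the n-fold tensor product
    of |psi_3> and the operations act copywise, this is the product of the
    per-copy amplitudes. *)
Definition joint_amp (u1 u2 u3 : bool) n (X Y Z A B C : 'I_n -> bool) : algC :=
  \prod_(i < n) amp3 (X i != u1) (Y i != u2) (Z i != u3) (A i) (B i) (C i).

Definition joint_prob (u1 u2 u3 : bool) n (X Y Z A B C : 'I_n -> bool) : algC :=
  `|joint_amp u1 u2 u3 X Y Z A B C| ^+ 2.

(* Main.v *)
Require Import Defs.
From mathcomp Require Import all_boot all_order all_algebra all_field ring.
Import Order.TTheory GRing.Theory Num.Theory.
Local Open Scope ring_scope.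

Lemma core (g1 g2 g3 a b c : bool) : inE3 g1 g2 g3 -> amp3 g1 g2 g3 a b c != 0 ->
  a (+) b (+) c = [|| g1, g2 | g3].
Proof.
rewrite /amp3 !big_bool /=.
case: g1; case: g2; case: g3 => //= _; case: a; case: b; case: c => //=;
rewrite /hadamard /identity_gate /psi3 /= ?mulr0 ?mul0r ?addr0 ?add0r ?mulr1 ?mul1r;
first [ by move=> _ | move=> H; exfalso; move/negP: H; apply; apply/eqP; ring].
Qed.

Lemma copy (u1 u2 u3 x y z a b c : bool) : inE3 u1 u2 u3 -> inE3 x y z ->
  amp3 (x != u1) (y != u2) (z != u3) a b c != 0 ->
  [&& x == u1, y == u2 & z == u3] = ~~ a (+) b (+) c.
Proof.
move=> hu hx hnz; have := @core _ _ _ _ _ _ ^~ hnz; move: hu hx.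
by clear hnz; case: x y z u1 u2 u3 a b c => [] [] [] [] [] [] [] [] [] //=; rewrite /inE3 /=; try by move=> _ _ /(_ erefl).
Qed.

Theorem theorem1 (u1 u2 u3 : bool) (n : nat) :
  inE3 u1 u2 u3 -> (1 <= n)%N ->
  exists (msgB : ('I_n -> bool) -> ('I_n -> bool) -> bool)
         (msgC : ('I_n -> bool) -> ('I_n -> bool) -> bool)
         (out  : ('I_n -> bool) -> ('I_n -> bool) -> bool -> bool -> bool),
    forall X Y Z : 'I_n -> bool,
      (forall i, inE3 (X i) (Y i) (Z i)) ->
      forall A B C : 'I_n -> bool,
        0 < joint_prob u1 u2 u3 X Y Z A B C ->
        out X A (msgB Y B) (msgC Z C) = f_u u1 u2 u3 X Y Z.
Proof.
move=> hu _.
exists (fun _ B => \big[addb/false]_(i < n) B i).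
exists (fun _ C => \big[addb/false]_(i < n) C i).
exists (fun _ A mb mc => \big[addb/false]_(i < n) ~~ A i (+) mb (+) mc).
move=> X Y Z hXYZ A B C hp.
have hnz : joint_amp u1 u2 u3 X Y Z A B C != 0.
  apply/eqP => h0; move: hp; by rewrite /joint_prob h0 normr0 expr0n ltxx.
rewrite /f_u -!big_split /=.
apply: eq_bigr => i _.
rewrite (@copy _ _ _ _ _ _ (A i) (B i) (C i) hu (hXYZ i)) //.
by move: hnz; rewrite /joint_amp prodf_seq_neq0 => /allP /(_ i (mem_index_enum _)).
Qed.
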